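(* Let the functions satisfy the $M=2$ system and the boundary conditions (B) (see context). Then for all $s>0$, $$e_3-sx_1y_2+2\eta_2+\xi_0-\eta_1+\eta_1\xi_2=0,\qquad e_2-2e_3-sx_0y_1-\eta_2-2\xi_0-\xi_1+\eta_0\xi_1=0 .$$
   Context: Fix complex parameters $\nu_0,\nu_1,\nu_2$ with $\nu_2-\nu_1\notin\mathbb Z$, and let $e_1=\nu_0+\nu_1+\nu_2$, $e_2=\nu_0\nu_1+\nu_0\nu_2+\nu_1\nu_2$, $e_3=\nu_0\nu_1\nu_2$. The $M=2$ system is the following system for smooth complex-valued functions $x_0,x_1,x_2,y_0,y_1,y_2,\xi_0,\xi_1,\xi_2,\eta_0,\eta_1,\eta_2$ of $s\in(0,\infty)$, with $'=d/ds$: $sx_0'=-\eta_0x_0-x_1$, $sx_1'=-\eta_1x_0-x_2$, $sx_2'=-\eta_2x_0-sx_0+\xi_0x_0+\xi_1x_1+\xi_2x_2$, $sy_2'=-\xi_2y_2+y_1$, $sy_1'=-\xi_1y_2+y_0$, $sy_0'=-\xi_0y_2+sy_2+\eta_0y_0+\eta_1y_1+\eta_2y_2$, $\xi_0'=-x_0y_0$, $\xi_1'=-x_0y_1$, $\xi_2'=-x_0y_2$, $\eta_0'=-x_0y_2$, $\eta_1'=-x_1y_2$, $\eta_2'=-x_2y_2$. Boundary conditions (B): as $s\to0^+$, $\eta_0,\eta_1,\eta_2\to0$, $\xi_0\to-e_3$, $\xi_1\to e_2$, $\xi_2\to-e_1$, and $x_j(s)y_k(s)\to0$, $s\,x_j(s)y_k(s)\to0$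 for all $j,k\in\{0,1,2\}$. *)

(* Defs.v *)
From Stdlib Require Import Reals ZArith.
Open Scope R_scope.

Definition Cx : Type := (R * R)%type.
Definition RtoC (r : R) : Cx := (r, 0).
Definition Cadd (z w : Cx) : Cx := (fst z + fst w, snd z + snd w).
Definition Copp (z : Cx) : Cx := (- fst z, - snd z).
Definition Csub (z w : Cx) : Cx := Cadd z (Copp w).
Definition Cmul (z w : Cx) : Cx :=
  (fst z * fst w - snd z * snd w, fst z * snd w + snd z * fst w).
Definition Cnorm (z : Cx) : R := sqrt (fst z ^ 2 + snd z ^ 2).
Definition C0 : Cx := (0, 0).

Declare Scope C_scope.
Delimit Scope C_scope with C.
Infix "+" := Cadd : C_scope.
Infix "-" := Csub : C_scope.
Infix "*" := Cmul : C_scope.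
Notation "- z" := (Copp z) : C_scope.

Definition Cderiv_at (f : R -> Cx) (d : Cx) (s : R) : Prop :=
  derivable_pt_lim (fun t => fst (f t)) s (fst d) /\
  derivable_pt_lim (fun t => snd (f t)) s (snd d).

Definition Clim0plus (f : R -> Cx) (l : Cx) : Prop :=
  forall eps : R, 0 < eps ->
    exists delta : R, 0 < delta /\
      forall s : R, 0 < s < delta -> Cnorm (Csub (f s) l) < eps.

(* Main.v *)
Require Import Defs.
From Stdlib Require Import Reals ZArith List Lra.
Open Scope R_scope.
Definition RL (f : R -> R) (l : R) : Prop :=
  forall eps, 0 < eps -> exists d, 0 < d /\ forall s, 0 < s < d -> Rabs (f s - l) < eps.

Lemma RL_const c : RL (fun _ => c) c.
Proof. intros e He; exists 1; split; [lra|]; intros; unfold Rminus; rewrite Rplus_opp_r, Rabs_R0; lra. Qed.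

Lemma RL_plus f g a b : RL f a -> RL g b -> RL (fun t => f t + g t) (a + b).
Proof.
  intros Hf Hg e He.
  destruct (Hf (e/2)) as [d1 [Hd1 H1]]; [lra|].
  destruct (Hg (e/2)) as [d2 [Hd2 H2]]; [lra|].
  exists (Rmin d1 d2); split; [apply Rmin_pos; lra|].
  intros s Hs. assert (s < d1) by (eapply Rlt_le_trans; [apply Hs| apply Rmin_l]).
  assert (s < d2) by (eapply Rlt_le_trans; [apply Hs| apply Rmin_r]).
  specialize (H1 s ltac:(lra)); specialize (H2 s ltac:(lra)).
  replace (f s + g s - (a + b)) with ((f s - a) + (g s - b)) by ring.
  eapply Rle_lt_trans; [apply Rabs_triang|]. lra.
Qed.

Lemma RL_opp f a : RL f a -> RL (fun t => - f t) (- a).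
Proof.
  intros Hf e He. destruct (Hf e He) as [d [Hd H]]. exists d; split; auto.
  intros s Hs. replace (- f s - - a) with (- (f s - a)) by ring. rewrite Rabs_Ropp; auto.
Qed.

Lemma RL_mult f g a b : RL f a -> RL g b -> RL (fun t => f t * g t) (a * b).
Proof.
  intros Hf Hg e He.
  assert (Pa : 0 <= Rabs a) by apply Rabs_pos.
  assert (Pb : 0 <= Rabs b) by apply Rabs_pos.
  destruct (Hf (e/(2*(Rabs b + 1)))) as [d1 [Hd1 H1]].
  { apply Rdiv_lt_0_compat; lra. }
  destruct (Hg (Rmin 1 (e/(2*(Rabs a + 1))))) as [d2 [Hd2 H2]].
  { apply Rmin_pos; [lra|]. apply Rdiv_lt_0_compat; lra. }
  exists (Rmin d1 d2); split; [apply Rmin_pos; lra|].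
  intros s Hs. assert (s < d1) by (eapply Rlt_le_trans; [apply Hs| apply Rmin_l]).
  assert (s < d2) by (eapply Rlt_le_trans; [apply Hs| apply Rmin_r]).
  specialize (H1 s ltac:(lra)); specialize (H2 s ltac:(lra)).
  assert (H2a : Rabs (g s - b) < 1) by (eapply Rlt_le_trans; [apply H2|apply Rmin_l]).
  assert (H2b : Rabs (g s - b) < e/(2*(Rabs a + 1))) by (eapply Rlt_le_trans; [apply H2|apply Rmin_r]).
  assert (Hgs : Rabs (g s) <= Rabs b + 1).
  { replace (g s) with ((g s - b) + b) by ring. eapply Rle_trans; [apply Rabs_triang|]. lra. }
  replace (f s * g s - a * b) with ((f s - a) * g s + a * (g s - b)) by ring.
  eapply Rle_lt_trans; [apply Rabs_triang|]. rewrite !Rabs_mult.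
  assert (X1 : Rabs (f s - a) * Rabs (g s) <= e/(2*(Rabs b+1)) * (Rabs b + 1)).
  { apply Rmult_le_compat; try apply Rabs_pos; lra. }
  assert (X2 : Rabs a * Rabs (g s - b) <= (Rabs a + 1) * (e/(2*(Rabs a + 1)))).
  { apply Rmult_le_compat; try apply Rabs_pos; lra. }
  assert (X3 : Rabs a * Rabs (g s - b) < (Rabs a + 1) * (e/(2*(Rabs a + 1))) \/
               Rabs (f s - a) * Rabs (g s) < e/(2*(Rabs b+1)) * (Rabs b + 1)).
  { destruct (Req_dec (Rabs (g s - b)) 0) as [Z|Z].
    - left. rewrite Z, Rmult_0_r. apply Rmult_lt_0_compat; [lra|]. apply Rdiv_lt_0_compat; lra.
    - left. apply Rle_lt_trans with ((Rabs a + 1) * Rabs (g s - b)).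
      + apply Rmult_le_compat_r; [apply Rabs_pos|lra].
      + apply Rmult_lt_compat_l; lra. }
  replace (e/(2*(Rabs b+1)) * (Rabs b + 1)) with (e/2) in * by (field; lra).
  replace ((Rabs a + 1) * (e/(2*(Rabs a + 1)))) with (e/2) in * by (field; lra).
  lra.
Qed.

Lemma RL_uniq f c l : (forall t, 0 < t -> f t = c) -> RL f l -> c = l.
Proof.
  intros Hc Hl. destruct (Req_dec c l) as [|N]; auto.
  destruct (Hl (Rabs (c - l))) as [d [Hd H]].
  { apply Rabs_pos_lt. lra. }
  specialize (H (d/2) ltac:(lra)). rewrite Hc in H by lra. lra.
Qed.

Definition CL (f : R -> Cx) (l : Cx) := RL (fun t => fst (f t)) (fst l) /\ RL (fun t => snd (f t)) (snd l).

Lemma CL_of f l : Clim0plus f l -> CL f l.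
Proof.
  intros H; split; intros e He; destruct (H e He) as [d [Hd Hs]]; exists d; split; auto;
  intros s Hs'; specialize (Hs s Hs'); unfold Cnorm, Csub, Cadd, Copp in Hs; simpl in Hs.
  - apply Rle_lt_trans with (2 := Hs). rewrite <- sqrt_Rsqr_abs; apply sqrt_le_1_alt; unfold Rsqr; simpl; pose proof (Rle_0_sqr (snd (f s) + - snd l)); pose proof (Rle_0_sqr (fst (f s) + - fst l)); unfold Rsqr in *; lra.
  - apply Rle_lt_trans with (2 := Hs). rewrite <- sqrt_Rsqr_abs; apply sqrt_le_1_alt; unfold Rsqr; simpl; pose proof (Rle_0_sqr (snd (f s) + - snd l)); pose proof (Rle_0_sqr (fst (f s) + - fst l)); unfold Rsqr in *; lra.
Qed.

Lemma CL_add f g a b : CL f a -> CL g b -> CL (fun t => f t + g t)%C (a + b)%C.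
Proof. unfold CL; intros [] []; split; simpl; apply RL_plus; auto. Qed.
Lemma CL_opp f a : CL f a -> CL (fun t => - f t)%C (- a)%C.
Proof. unfold CL; intros []; split; simpl; apply RL_opp; auto. Qed.
Lemma CL_sub f g a b : CL f a -> CL g b -> CL (fun t => f t - g t)%C (a - b)%C.
Proof. intros. apply CL_add; auto. apply CL_opp; auto. Qed.
Lemma CL_mul f g a b : CL f a -> CL g b -> CL (fun t => f t * g t)%C (a * b)%C.
Proof.
  unfold CL; intros [] []; split; simpl.
  - apply (RL_plus (fun t => fst (f t) * fst (g t)) (fun t => - (snd (f t) * snd (g t))));
    [|apply RL_opp]; apply RL_mult; auto.
  - apply RL_plus; apply RL_mult; auto.
Qed.
Lemma CL_const c : CL (fun _ => c) c.
Proof. unfold CL; split; apply RL_const. Qed.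

Lemma Cd_ext f d d' s : Cderiv_at f d s -> d = d' -> Cderiv_at f d' s.
Proof. intros H ->; exact H. Qed.

Lemma Cd_add f g a b s : Cderiv_at f a s -> Cderiv_at g b s ->
  Cderiv_at (fun t => f t + g t)%C (a + b)%C s.
Proof.
  intros [Ha1 Ha2] [Hb1 Hb2]; split; simpl.
  - apply (derivable_pt_lim_plus (fun t => fst (f t)) (fun t => fst (g t))); auto.
  - apply (derivable_pt_lim_plus (fun t => snd (f t)) (fun t => snd (g t))); auto.
Qed.

Lemma Cd_opp f a s : Cderiv_at f a s -> Cderiv_at (fun t => - f t)%C (- a)%C s.
Proof.
  intros [Ha1 Ha2]; split; simpl.
  - apply (derivable_pt_lim_opp (fun t => fst (f t))); auto.
  - apply (derivable_pt_lim_opp (fun t => snd (f t))); auto.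
Qed.

Lemma Cd_sub f g a b s : Cderiv_at f a s -> Cderiv_at g b s ->
  Cderiv_at (fun t => f t - g t)%C (a - b)%C s.
Proof. intros. apply Cd_add; auto. apply Cd_opp; auto. Qed.

Lemma Cd_mul f g a b s : Cderiv_at f a s -> Cderiv_at g b s ->
  Cderiv_at (fun t => f t * g t)%C (a * g s + f s * b)%C s.
Proof.
  intros [Ha1 Ha2] [Hb1 Hb2]; split; simpl.
  - pose proof (derivable_pt_lim_minus _ _ _ _ _
      (derivable_pt_lim_mult (fun t => fst (f t)) (fun t => fst (g t)) _ _ _ Ha1 Hb1)
      (derivable_pt_lim_mult (fun t => snd (f t)) (fun t => snd (g t)) _ _ _ Ha2 Hb2)) as H.
    unfold minus_fct, mult_fct in H.
    match goal with |- derivable_pt_lim _ _ ?l => replace l with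
      (fst a * fst (g s) + fst (f s) * fst b - (snd a * snd (g s) + snd (f s) * snd b)) by ring end.
    exact H.
  - pose proof (derivable_pt_lim_plus _ _ _ _ _
      (derivable_pt_lim_mult (fun t => fst (f t)) (fun t => snd (g t)) _ _ _ Ha1 Hb2)
      (derivable_pt_lim_mult (fun t => snd (f t)) (fun t => fst (g t)) _ _ _ Ha2 Hb1)) as H.
    unfold plus_fct, mult_fct in H.
    match goal with |- derivable_pt_lim _ _ ?l => replace l with
      (fst a * snd (g s) + fst (f s) * snd b + (snd a * fst (g s) + snd (f s) * fst b)) by ring end.
    exact H.
Qed.

Lemma Cd_const c s : Cderiv_at (fun _ => c) C0 s.
Proof. split; simpl; apply derivable_pt_lim_const. Qed.

Lemma Cd_RtoC s : Cderiv_at (fun t => RtoC t) (RtoC 1) s.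
Proof. split; simpl; [apply derivable_pt_lim_id | apply derivable_pt_lim_const]. Qed.

Lemma const_pos g : (forall t, 0 < t -> derivable_pt_lim g t 0) ->
  forall a b, 0 < a -> 0 < b -> g a = g b.
Proof.
  intros H.
  assert (K : forall a b, 0 < a -> a < b -> g a = g b).
  { intros a b Ha Hab.
    destruct (MVT_cor2 g (fun _ => 0) a b Hab) as [c [Hc _]].
    - intros c Hc; apply H; lra.
    - lra. }
  intros a b Ha Hb. destruct (total_order_T a b) as [[|]|].
  - apply K; auto.
  - subst; auto.
  - symmetry; apply K; auto.
Qed.

Lemma Cconst_zero F L : (forall t, 0 < t -> Cderiv_at F C0 t) -> CL F L ->
  forall s, 0 < s -> F s = L.
Proof.
  intros HD [H1 H2] s Hs.
  assert (A1 : fst (F s) = fst L).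
  { apply (RL_uniq (fun t => fst (F t))); auto. intros t Ht.
    apply (const_pos (fun t => fst (F t))); auto. intros u Hu. apply (HD u Hu). }
  assert (A2 : snd (F s) = snd L).
  { apply (RL_uniq (fun t => snd (F t))); auto. intros t Ht.
    apply (const_pos (fun t => snd (F t))); auto. intros u Hu. apply (HD u Hu). }
  destruct (F s), L; simpl in *; subst; auto.
Qed.

Lemma Csolve s a b : (RtoC s * a = b)%C -> 0 < s -> a = (RtoC (/ s) * b)%C.
Proof.
  intros H Hs; subst b. destruct a as [a1 a2]. unfold Cmul, RtoC; simpl.
  f_equal; field; lra.
Qed.

Ltac cder := repeat first [ eassumption | apply Cd_RtoC | apply Cd_sub | apply Cd_add
                          | apply Cd_mul | apply Cd_opp | apply Cd_const ].
Ltac clim := repeat first [ eassumption | apply CL_sub | apply CL_add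
                          | apply CL_mul | apply CL_opp | apply CL_const ].
Ltac cring := unfold Cmul, Cadd, Csub, Copp, RtoC, C0; simpl; f_equal; ring.

Theorem mainTheorem7
  (nu0 nu1 nu2 : Cx)
  (Hnu : forall k : Z, Csub nu2 nu1 <> RtoC (IZR k))
  (x0 x1 x2 y0 y1 y2 xi0 xi1 xi2 eta0 eta1 eta2 : R -> Cx)
  (dx0 dx1 dx2 dy0 dy1 dy2 dxi0 dxi1 dxi2 deta0 deta1 deta2 : R -> Cx)
  (Dx0 : forall s, 0 < s -> Cderiv_at x0 (dx0 s) s)
  (Dx1 : forall s, 0 < s -> Cderiv_at x1 (dx1 s) s)
  (Dx2 : forall s, 0 < s -> Cderiv_at x2 (dx2 s) s)
  (Dy0 : forall s, 0 < s -> Cderiv_at y0 (dy0 s) s)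
  (Dy1 : forall s, 0 < s -> Cderiv_at y1 (dy1 s) s)
  (Dy2 : forall s, 0 < s -> Cderiv_at y2 (dy2 s) s)
  (Dxi0 : forall s, 0 < s -> Cderiv_at xi0 (dxi0 s) s)
  (Dxi1 : forall s, 0 < s -> Cderiv_at xi1 (dxi1 s) s)
  (Dxi2 : forall s, 0 < s -> Cderiv_at xi2 (dxi2 s) s)
  (Deta0 : forall s, 0 < s -> Cderiv_at eta0 (deta0 s) s)
  (Deta1 : forall s, 0 < s -> Cderiv_at eta1 (deta1 s) s)
  (Deta2 : forall s, 0 < s -> Cderiv_at eta2 (deta2 s) s)
  (E1 : forall s, 0 < s ->
     (RtoC s * dx0 s = - (eta0 s * x0 s) - x1 s)%C)
  (E2 : forall s, 0 < s ->
     (RtoC s * dx1 s = - (eta1 s * x0 s) - x2 s)%C)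
  (E3 : forall s, 0 < s ->
     (RtoC s * dx2 s = - (eta2 s * x0 s) - RtoC s * x0 s
        + xi0 s * x0 s + xi1 s * x1 s + xi2 s * x2 s)%C)
  (E4 : forall s, 0 < s ->
     (RtoC s * dy2 s = - (xi2 s * y2 s) + y1 s)%C)
  (E5 : forall s, 0 < s ->
     (RtoC s * dy1 s = - (xi1 s * y2 s) + y0 s)%C)
  (E6 : forall s, 0 < s ->
     (RtoC s * dy0 s = - (xi0 s * y2 s) + RtoC s * y2 s
        + eta0 s * y0 s + eta1 s * y1 s + eta2 s * y2 s)%C)
  (E7 : forall s, 0 < s -> dxi0 s = (- (x0 s * y0 s))%C)
  (E8 : forall s, 0 < s -> dxi1 s = (- (x0 s * y1 s))%C)
  (E9 : forall s, 0 < s -> dxi2 s = (- (x0 s * y2 s))%C)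
  (E10 : forall s, 0 < s -> deta0 s = (- (x0 s * y2 s))%C)
  (E11 : forall s, 0 < s -> deta1 s = (- (x1 s * y2 s))%C)
  (E12 : forall s, 0 < s -> deta2 s = (- (x2 s * y2 s))%C)
  (B1 : Clim0plus eta0 C0)
  (B2 : Clim0plus eta1 C0)
  (B3 : Clim0plus eta2 C0)
  (B4 : Clim0plus xi0 (- (nu0 * nu1 * nu2))%C)
  (B5 : Clim0plus xi1 (nu0 * nu1 + nu0 * nu2 + nu1 * nu2)%C)
  (B6 : Clim0plus xi2 (- (nu0 + nu1 + nu2))%C)
  (B7 : forall (x y : R -> Cx), In x (x0 :: x1 :: x2 :: nil) ->
          In y (y0 :: y1 :: y2 :: nil) ->
          Clim0plus (fun s => (x s * y s)%C) C0 /\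
          Clim0plus (fun s => (RtoC s * (x s * y s))%C) C0) :
  let e1 := (nu0 + nu1 + nu2)%C in
  let e2 := (nu0 * nu1 + nu0 * nu2 + nu1 * nu2)%C in
  let e3 := (nu0 * nu1 * nu2)%C in
  forall s : R, 0 < s ->
    (e3 - RtoC s * (x1 s * y2 s) + RtoC 2 * eta2 s + xi0 s - eta1 s
       + eta1 s * xi2 s = C0)%C /\
    (e2 - RtoC 2 * e3 - RtoC s * (x0 s * y1 s) - eta2 s - RtoC 2 * xi0 s
       - xi1 s + eta0 s * xi1 s = C0)%C.
Proof.
  intros e1 e2 e3 s Hs.
  assert (inx : forall P Q R0 : R -> Cx, In P (P :: Q :: R0 :: nil)) by (intros; simpl; auto).
  assert (iny : forall P Q R0 : R -> Cx, In Q (P :: Q :: R0 :: nil)) by (intros; simpl; auto).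
  assert (inz : forall P Q R0 : R -> Cx, In R0 (P :: Q :: R0 :: nil)) by (intros; simpl; auto).
  pose proof (CL_of _ _ (proj1 (B7 x0 y0 (inx _ _ _) (inx _ _ _)))) as L00.
  pose proof (CL_of _ _ (proj1 (B7 x1 y1 (iny _ _ _) (iny _ _ _)))) as L11.
  pose proof (CL_of _ _ (proj1 (B7 x2 y2 (inz _ _ _) (inz _ _ _)))) as L22.
  pose proof (CL_of _ _ (proj2 (B7 x1 y2 (iny _ _ _) (inz _ _ _)))) as S12.
  pose proof (CL_of _ _ (proj2 (B7 x0 y1 (inx _ _ _) (iny _ _ _)))) as S01.
  pose proof (CL_of _ _ B1) as LB1. pose proof (CL_of _ _ B2) as LB2.
  pose proof (CL_of _ _ B3) as LB3. pose proof (CL_of _ _ B4) as LB4.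
  pose proof (CL_of _ _ B5) as LB5. pose proof (CL_of _ _ B6) as LB6.
  set (Tf := fun t => (x0 t * y0 t + x1 t * y1 t + x2 t * y2 t)%C).
  assert (HT : forall t, 0 < t -> Tf t = C0).
  { apply Cconst_zero.
    - intros t Ht.
      pose proof (Dx0 t Ht). pose proof (Dx1 t Ht). pose proof (Dx2 t Ht).
      pose proof (Dy0 t Ht). pose proof (Dy1 t Ht). pose proof (Dy2 t Ht).
      unfold Tf. eapply Cd_ext; [cder|].
      rewrite (Csolve _ _ _ (E1 t Ht) Ht), (Csolve _ _ _ (E2 t Ht) Ht),
        (Csolve _ _ _ (E3 t Ht) Ht), (Csolve _ _ _ (E4 t Ht) Ht),
        (Csolve _ _ _ (E5 t Ht) Ht), (Csolve _ _ _ (E6 t Ht) Ht).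
      unfold Cmul, Cadd, Csub, Copp, RtoC, C0; simpl; f_equal; field; lra.
    - unfold Tf. replace C0 with (C0 + C0 + C0)%C by cring. clim. }
  split.
  - set (F := fun t => (e3 - RtoC t * (x1 t * y2 t) + RtoC 2 * eta2 t + xi0 t - eta1 t
       + eta1 t * xi2 t)%C).
    change (F s = C0).
    assert (HL : CL F (e3 - C0 + RtoC 2 * C0 + (- (nu0 * nu1 * nu2)) - C0 + C0 * (- (nu0 + nu1 + nu2)))%C)
      by (unfold F; clim).
    assert (HD : forall t, 0 < t -> Cderiv_at F C0 t).
    {intros t Ht.
      pose proof (Dx0 t Ht). pose proof (Dx1 t Ht). pose proof (Dx2 t Ht).
      pose proof (Dy0 t Ht). pose proof (Dy1 t Ht). pose proof (Dy2 t Ht).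
      pose proof (Dxi0 t Ht). pose proof (Dxi1 t Ht). pose proof (Dxi2 t Ht).
      pose proof (Deta0 t Ht). pose proof (Deta1 t Ht). pose proof (Deta2 t Ht).
      unfold F. eapply Cd_ext; [cder|].
      pose proof (HT t Ht) as HTt. unfold Tf in HTt.
      rewrite (Csolve _ _ _ (E2 t Ht) Ht), (Csolve _ _ _ (E4 t Ht) Ht),
        (E7 t Ht), (E9 t Ht), (E11 t Ht), (E12 t Ht).
      transitivity (- (x0 t * y0 t + x1 t * y1 t + x2 t * y2 t))%C.
      + unfold Cmul, Cadd, Csub, Copp, RtoC, C0; simpl; f_equal; field; lra.
      + rewrite HTt. cring. }
    rewrite (Cconst_zero F _ HD HL s Hs). subst e3; cring.

  - set (F := fun t => (e2 - RtoC 2 * e3 - RtoC t * (x0 t * y1 t) - eta2 t - RtoC 2 * xi0 t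
       - xi1 t + eta0 t * xi1 t)%C).
    change (F s = C0).
    assert (HL : CL F (e2 - RtoC 2 * e3 - C0 - C0 - RtoC 2 * (- (nu0 * nu1 * nu2))
       - (nu0 * nu1 + nu0 * nu2 + nu1 * nu2) + C0 * (nu0 * nu1 + nu0 * nu2 + nu1 * nu2))%C)
      by (unfold F; clim).
    assert (HD : forall t, 0 < t -> Cderiv_at F C0 t).
    {intros t Ht.
      pose proof (Dx0 t Ht). pose proof (Dx1 t Ht). pose proof (Dx2 t Ht).
      pose proof (Dy0 t Ht). pose proof (Dy1 t Ht). pose proof (Dy2 t Ht).
      pose proof (Dxi0 t Ht). pose proof (Dxi1 t Ht). pose proof (Dxi2 t Ht).
      pose proof (Deta0 t Ht). pose proof (Deta1 t Ht). pose proof (Deta2 t Ht).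
      unfold F. eapply Cd_ext; [cder|].
      pose proof (HT t Ht) as HTt. unfold Tf in HTt.
      rewrite (Csolve _ _ _ (E1 t Ht) Ht), (Csolve _ _ _ (E5 t Ht) Ht),
        (E7 t Ht), (E8 t Ht), (E10 t Ht), (E12 t Ht).
      transitivity (x0 t * y0 t + x1 t * y1 t + x2 t * y2 t)%C.
      + unfold Cmul, Cadd, Csub, Copp, RtoC, C0; simpl; f_equal; field; lra.
      + rewrite HTt. reflexivity. }
    rewrite (Cconst_zero F _ HD HL s Hs). subst e2 e3; cring.

Qed.
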